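(* With $B_n$ as in the context and $L_n=|B_n|$, one has $\lim_{n\to\infty} L_{n+1}/L_n=\alpha$, where $\alpha\approx 2.20557$ is the unique real root of $x^3-2x^2-1=0$.
   Context: Generation operator: for a finite vector $R=\langle r_1,\dots,r_m\rangle$ of positive integers and $s\in\{1,3\}$, $\mathcal{G}(R,s)= s^{r_1}\,(4-s)^{r_2}\,s^{r_3}\cdots$ (the $i$-th run consists of $r_i$ copies of $s$ if $i$ is odd and of $4-s$ if $i$ is even), of length $\sum_i r_i$. For a finite word $W$ over $\{1,3\}$, $R(W)$ denotes $W$ itself regarded as a vector of positive integers. Define $B_1=\mathcal{G}(\langle 1,3,3,3,1\rangle,1)=1\,3\,3\,3\,1\,1\,1\,3\,3\,3\,1$, $P_1=3$, and for $n\ge1$: $B_{n+1}=B_n\,P_n\,B_n$ (concatenation), $P_{n+1}=\mathcal{G}(R(P_n),3)$. *)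

(* Defs.v *)
From Stdlib Require Import Reals List Arith.
Import ListNotations.

(* Generation operator G(R, s): the i-th run has r_i copies of s (i odd)
   or of 4 - s (i even). *)
Fixpoint gen (r : list nat) (s : nat) : list nat :=
  match r with
  | [] => []
  | x :: r' => repeat s x ++ gen r' (4 - s)
  end.

Definition B1 : list nat := gen [1; 3; 3; 3; 1] 1.
Definition P1 : list nat := [3].

(* BP k = (B_{k+1}, P_{k+1}); R(W) is W itself. *)
Fixpoint BP (k : nat) : list nat * list nat :=
  match k with
  | 0 => (B1, P1)
  | S k' => let (b, p) := BP k' in (b ++ p ++ b, gen p 3)
  end.

(* B n for n >= 1 (B 0 is a junk copy of B 1). *)
Definition B (n : nat) : list nat := fst (BP (n - 1)).
Definition L (n : nat) : nat := length (B n).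

(* Main.v *)
Require Import Defs.
From Stdlib Require Import Reals List Arith Lia Lra Psatz.
Import ListNotations.


Fixpoint cnt (v : nat) (q : bool) (w : list nat) : nat :=
  match w with
  | [] => 0
  | x :: w' => (if andb q (Nat.eqb x v) then 1 else 0) + cnt v (negb q) w'
  end.

Fixpoint f (q : bool) (w : list nat) : list nat :=
  match w with
  | [] => []
  | x :: w' => repeat (if q then 3 else 1) x ++ f (negb q) w'
  end.

Lemma gen_f : forall w (q : bool), gen w (if q then 3 else 1) = f q w.
Proof.
  induction w as [|x w IH]; intros q; simpl; auto.
  destruct q; simpl; rewrite <- IH; reflexivity.
Qed.

Definition ok (w : list nat) := Forall (fun x => x = 1 \/ x = 3) w.

Lemma f_ok : forall w q, ok (f q w).
Proof.
  induction w as [|x w IH]; intros q; simpl; [constructor|].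
  apply Forall_app; split; [|apply IH].
  apply Forall_forall; intros y Hy; apply repeat_spec in Hy; destruct q; subst; auto.
Qed.

Lemma len_cnt : forall w (q:bool), ok w ->
  length w = cnt 3 q w + cnt 3 (negb q) w + cnt 1 q w + cnt 1 (negb q) w.
Proof.
  induction w as [|x w IH]; intros q Hw; simpl; auto.
  inversion Hw; subst. specialize (IH (negb q) H2).
  destruct q; destruct H1; subst; simpl in *; lia.
Qed.

Lemma cnt_f : forall w (q:bool), ok w ->
  cnt 3 q (f q w) = 2 * cnt 3 q w + cnt 1 q w /\
  cnt 3 (negb q) (f q w) = cnt 3 q w /\
  cnt 1 q (f q w) = cnt 3 (negb q) w /\
  cnt 1 (negb q) (f q w) = 2 * cnt 3 (negb q) w + cnt 1 (negb q) w.
Proof.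
  induction w as [|x w IH]; intros q Hw; simpl; auto.
  inversion Hw; subst. specialize (IH (negb q) H2).
  destruct q; destruct H1; subst; simpl in *; lia.
Qed.

Lemma BP_S : forall k, BP (S k) =
  (fst (BP k) ++ snd (BP k) ++ fst (BP k), gen (snd (BP k)) 3).
Proof. intros k; simpl; destruct (BP k); reflexivity. Qed.

Definition P k := snd (BP k).
Definition Lb k := length (fst (BP k)).
Definition a k := cnt 3 true (P k).
Definition b k := cnt 3 false (P k).
Definition c k := cnt 1 true (P k).
Definition d k := cnt 1 false (P k).

Lemma P_S k : P (S k) = f true (P k).
Proof. unfold P; rewrite BP_S; simpl. apply (gen_f _ true). Qed.

Lemma P_ok k : ok (P k).
Proof.
  destruct k.
  - unfold P, ok; simpl. constructor; [right; reflexivity|constructor].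
  - rewrite P_S; apply f_ok.
Qed.

Lemma rec_abcd k : a (S k) = 2 * a k + c k /\ b (S k) = a k /\ c (S k) = b k
  /\ d (S k) = 2 * b k + d k.
Proof.
  unfold a, b, c, d. rewrite !P_S. apply (cnt_f _ true (P_ok k)).
Qed.

Lemma Lb_S k : Lb (S k) = 2 * Lb k + (a k + b k + c k + d k).
Proof.
  unfold Lb. rewrite BP_S; simpl. rewrite !length_app.
  pose proof (len_cnt _ true (P_ok k)). unfold a,b,c,d; unfold P in *; simpl in *; lia.
Qed.

Lemma init : a 0 = 1 /\ b 0 = 0 /\ c 0 = 0 /\ d 0 = 0 /\ Lb 0 = 11.
Proof. repeat split; reflexivity. Qed.

Lemma a3 k : a (k+3) = 2 * a (k+2) + a k.
Proof.
  replace (k+3) with (S (S (S k))) by lia; replace (k+2) with (S (S k)) by lia.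
  destruct (rec_abcd (S (S k))) as [H1 _]. destruct (rec_abcd (S k)) as [_ [_ [H2 _]]].
  destruct (rec_abcd k) as [_ [H3 _]]. lia.
Qed.
Lemma b3 k : b (k+3) = 2 * b (k+2) + b k.
Proof.
  replace (k+3) with (S (S (S k))) by lia; replace (k+2) with (S (S k)) by lia.
  pose proof (rec_abcd (S (S k))). pose proof (rec_abcd (S k)). pose proof (rec_abcd k). lia.
Qed.
Lemma c3 k : c (k+3) = 2 * c (k+2) + c k.
Proof.
  replace (k+3) with (S (S (S k))) by lia; replace (k+2) with (S (S k)) by lia.
  pose proof (rec_abcd (S (S k))). pose proof (rec_abcd (S k)). pose proof (rec_abcd k). lia.
Qed.
Lemma a_le_Lb k : a k <= Lb k.
Proof.
  induction k. { vm_compute. lia. }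
  rewrite Lb_S. destruct (rec_abcd k) as [H _]. lia.
Qed.

Open Scope R_scope.

Lemma pow_le1 (r : R) (m : nat) : 0 <= r <= 1 -> 0 <= r ^ m <= 1.
Proof.
  intros H; induction m; simpl; [lra|]. nra.
Qed.

Section Al.
Variable al : R.
Hypothesis Hal : 2205/1000 <= al <= 2206/1000.
Hypothesis Hcub : al ^ 3 - 2 * al ^ 2 - 1 = 0.

Lemma decay (x : nat -> R) (Hx : forall m, x (m+3)%nat = 2 * x (m+2)%nat + x m) :
  exists G, 0 <= G /\ forall m, Rabs (x (S m) - al * x m) <= G * (4/5) ^ m.
Proof.
  set (g := fun m => x (S m) - al * x m).
  assert (Hg : forall m, g (S (S m)) = (2 - al) * g (S m) - (al^2 - 2*al) * g m).
  { intros m; unfold g. replace (S (S (S m))) with (m+3)%nat by lia.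
    replace (S (S m)) with (m+2)%nat by lia. replace (S m) with (m+1)%nat by lia.
    rewrite Hx. assert (E : (al^3 - 2*al^2 - 1) * x m = 0) by (rewrite Hcub; ring).
    lra. }
  exists (Rabs (g 0%nat) + 2 * Rabs (g 1%nat)). split.
  { pose proof (Rabs_pos (g 0%nat)); pose proof (Rabs_pos (g 1%nat)); lra. }
  set (G := Rabs (g 0%nat) + 2 * Rabs (g 1%nat)).
  assert (H : forall m, Rabs (g m) <= G * (4/5)^m /\ Rabs (g (S m)) <= G * (4/5)^(S m)).
  { induction m as [|m [IH1 IH2]].
    - simpl. unfold G. pose proof (Rabs_pos (g 0%nat)); pose proof (Rabs_pos (g 1%nat)); lra.
    - split; [exact IH2|]. rewrite Hg.
      assert (Hb1 : Rabs (2 - al) <= 206/1000) by (apply Rabs_le; lra).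
      assert (Hb2 : Rabs (al^2 - 2*al) <= 4545/10000) by (apply Rabs_le; nra).
      pose proof (Rabs_triang ((2 - al) * g (S m)) (- ((al ^ 2 - 2 * al) * g m))).
      rewrite Rabs_Ropp, !Rabs_mult in H.
      pose proof (Rabs_pos (g m)); pose proof (Rabs_pos (g (S m))).
      pose proof (Rabs_pos (2-al)); pose proof (Rabs_pos (al^2-2*al)).
      assert (0 <= G * (4/5)^m).
      { unfold G. pose proof (Rabs_pos (g 0%nat)); pose proof (Rabs_pos (g 1%nat)).
        pose proof (pow_le1 (4/5) m). nra. }
      simpl in *. unfold Rminus in *.
      set (t := G * (4/5)^m) in *.
      assert (Rabs (2 + - al) * Rabs (g (S m)) <= 206/1000 * (G * (4/5 * (4/5)^m))) by
        (apply Rmult_le_compat; lra).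
      assert (Rabs (al * (al * 1) + - (2 * al)) * Rabs (g m) <= 4545/10000 * t) by
        (apply Rmult_le_compat; lra).
      assert (G * (4/5 * (4/5)^m) = 4/5 * t) by (unfold t; ring).
      assert (G * (4/5 * (4/5 * (4/5)^m)) = 16/25 * t) by (unfold t; field).
      lra. }
  intros m; apply H.
Qed.
End Al.

Lemma INR2 : INR 2 = 2. Proof. simpl; lra. Qed.

Definition A m := INR (a m).
Definition Bq m := INR (b m).
Definition C m := INR (c m).
Definition D m := INR (d m).
Definition LL m := INR (Lb m).
Definition p m := A m + Bq m + C m + D m.

Lemma A3 m : A (m+3)%nat = 2 * A (m+2)%nat + A m.
Proof. unfold A; rewrite a3, plus_INR, mult_INR, INR2; reflexivity. Qed.
Lemma B3 m : Bq (m+3)%nat = 2 * Bq (m+2)%nat + Bq m.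
Proof. unfold Bq; rewrite b3, plus_INR, mult_INR, INR2; reflexivity. Qed.
Lemma C3 m : C (m+3)%nat = 2 * C (m+2)%nat + C m.
Proof. unfold C; rewrite c3, plus_INR, mult_INR, INR2; reflexivity. Qed.
Lemma DS m : D (S m) = D m + 2 * Bq m.
Proof. unfold D, Bq. destruct (rec_abcd m) as [_ [_ [_ H]]]. rewrite H, plus_INR, mult_INR, INR2; ring. Qed.
Lemma LS m : LL (S m) = 2 * LL m + p m.
Proof. unfold LL, p, A, Bq, C, D. rewrite Lb_S, !plus_INR, mult_INR, INR2; ring. Qed.

Lemma A_lower m : (1/2) * (11/5)^m <= A m.
Proof.
  assert (H : forall m, (1/2) * (11/5)^m <= A m /\ (1/2) * (11/5)^(S m) <= A (S m)
      /\ (1/2) * (11/5)^(S (S m)) <= A (S (S m))).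
  { induction m0 as [|m0 [H1 [H2 H3]]].
    - unfold A. destruct (rec_abcd 0) as [Ha1 _]. destruct (rec_abcd 1) as [Ha2 _].
      destruct (rec_abcd 0) as [_ [_ [Hc1 _]]].
      destruct init as [Ha0 [Hb0 [Hc0 _]]].
      rewrite Ha2, Ha1, Hc1. rewrite Ha0, Hc0, Hb0. simpl. lra.
    - split; [exact H2|split; [exact H3|]].
      replace (S (S (S m0))) with (m0+3)%nat by lia. rewrite A3.
      replace (m0+2)%nat with (S (S m0)) by lia.
      assert (0 <= (11/5)^m0) by (apply pow_le; lra).
      rewrite pow_add. simpl pow in *. set (X := (11/5)^m0) in *. lra. }
  apply H.
Qed.

Lemma LL_lower m : (1/2) * (11/5)^m <= LL m.
Proof. pose proof (A_lower m). unfold LL. pose proof (le_INR _ _ (a_le_Lb m)). fold (A m) in H0. lra. Qed.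

Section Al2.
Variable al : R.
Hypothesis Hal : 2205/1000 <= al <= 2206/1000.
Hypothesis Hcub : al ^ 3 - 2 * al ^ 2 - 1 = 0.

Lemma E_bound : exists K, 0 <= K /\ forall m, Rabs (LL (S m) - al * LL m) <= K * 2 ^ m.
Proof.
  destruct (decay al Hal Hcub A A3) as [Ga [Ga0 HGa]].
  destruct (decay al Hal Hcub Bq B3) as [Gb [Gb0 HGb]].
  destruct (decay al Hal Hcub C C3) as [Gc [Gc0 HGc]].
  set (kk := fun m => D (S m) - al * D m).
  assert (Hkk : forall m, kk (S m) = kk m + 2 * (Bq (S m) - al * Bq m)).
  { intros m; unfold kk. rewrite (DS (S m)), (DS m). ring. }
  set (K := Rabs (kk 0%nat) + 10 * Gb).
  assert (HK : forall m, Rabs (kk m) + 10 * Gb * (4/5)^m <= K).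
  { induction m.
    - unfold K; simpl; lra.
    - rewrite Hkk. pose proof (Rabs_triang (kk m) (2 * (Bq (S m) - al * Bq m))).
      rewrite Rabs_mult, (Rabs_pos_eq 2) in H by lra. pose proof (HGb m).
      simpl pow. lra. }
  set (H := Ga + Gb + Gc + K).
  assert (HH : forall m, Rabs (p (S m) - al * p m) <= H).
  { intros m. 
    assert (E : p (S m) - al * p m = (A (S m) - al * A m) + (Bq (S m) - al * Bq m)
       + (C (S m) - al * C m) + kk m) by (unfold p, kk; ring).
    rewrite E.
    pose proof (Rabs_triang ((A (S m) - al * A m) + (Bq (S m) - al * Bq m)
       + (C (S m) - al * C m)) (kk m)).
    pose proof (Rabs_triang ((A (S m) - al * A m) + (Bq (S m) - al * Bq m))
       (C (S m) - al * C m)).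
    pose proof (Rabs_triang (A (S m) - al * A m) (Bq (S m) - al * Bq m)).
    pose proof (HGa m); pose proof (HGb m); pose proof (HGc m); pose proof (HK m).
    pose proof (pow_le1 (4/5) m ltac:(lra)).
    assert (Ga * (4/5)^m <= Ga) by nra.
    assert (Gb * (4/5)^m <= Gb) by nra.
    assert (Gc * (4/5)^m <= Gc) by nra.
    assert (0 <= 10 * Gb * (4/5)^m) by nra.
    unfold H; lra. }
  set (E := fun m => LL (S m) - al * LL m).
  assert (HE : forall m, E (S m) = 2 * E m + (p (S m) - al * p m)).
  { intros m; unfold E. rewrite (LS (S m)), (LS m). ring. }
  exists (Rabs (E 0%nat) + H). split.
  { pose proof (Rabs_pos (E 0%nat)). pose proof (HH 0%nat). pose proof (Rabs_pos (p 1%nat - al * p 0%nat)). lra. }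
  assert (HI : forall m, Rabs (E m) + H <= (Rabs (E 0%nat) + H) * 2 ^ m).
  { induction m.
    - simpl; lra.
    - rewrite HE. pose proof (Rabs_triang (2 * E m) (p (S m) - al * p m)).
      rewrite Rabs_mult, (Rabs_pos_eq 2) in H0 by lra. pose proof (HH m).
      simpl pow. lra. }
  intros m. pose proof (HI m). pose proof (HH m). pose proof (Rabs_pos (p (S m) - al * p m)).
  fold (E m). lra.
Qed.
End Al2.

Lemma L_Lb m : L (S m) = Lb m.
Proof. unfold L, B, Lb. simpl. rewrite Nat.sub_0_r. reflexivity. Qed.

Theorem mainTheorem6 :
  exists alpha : R,
    (forall x : R, x ^ 3 - 2 * x ^ 2 - 1 = 0 <-> x = alpha) /\
    Un_cv (fun n : nat => INR (L (S n)) / INR (L n)) alpha.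
Proof.
  destruct (IVT (fun x => x^3 - 2*x^2 - 1) (2205/1000) (2206/1000)) as [al [Hal Hcub]].
  { reg. } { lra. } { simpl; lra. } { simpl; lra. }
  exists al. split.
  { intros x; split; [|intros ->; exact Hcub].
    intros Hx.
    assert (Hp : (x - al) * (x^2 + (al - 2) * x + (al^2 - 2*al)) = 0).
    { assert (E : (x - al) * (x^2 + (al - 2) * x + (al^2 - 2*al)) =
                  (x^3 - 2*x^2 - 1) - (al^3 - 2*al^2 - 1)) by ring.
      rewrite E, Hx, Hcub; ring. }
    assert (Hq : x^2 + (al - 2) * x + (al^2 - 2*al) > 0).
    { assert (E : x^2 + (al - 2) * x + (al^2 - 2*al) =
        (x + (al-2)/2)^2 + ((al^2 - 2*al) - (al-2)^2/4)) by field.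
      rewrite E. assert (0 <= (x + (al-2)/2)^2) by (apply pow2_ge_0). nra. }
    apply Rmult_integral in Hp. destruct Hp; [lra|lra]. }
  destruct (E_bound al Hal Hcub) as [K [K0 HK]].
  intros eps Heps.
  destruct (pow_lt_1_zero (10/11) ltac:(rewrite Rabs_pos_eq; lra) (eps / (2*K+1)))
    as [N HN].
  { apply Rdiv_lt_0_compat; lra. }
  exists (S N). intros n Hn. unfold R_dist.
  destruct n as [|m]; [lia|].
  assert (Hm : (m >= N)%nat) by lia.
  cbv beta. rewrite !L_Lb. fold (LL m) (LL (S m)).
  specialize (HN m Hm). rewrite Rabs_pos_eq in HN by (apply pow_le; lra).
  pose proof (HK m) as HE. pose proof (LL_lower m) as HL.
  set (X := (11/5)^m) in *. set (Y := (10/11)^m) in *.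
  assert (HXY : 2 ^ m = X * Y).
  { unfold X, Y. rewrite <- Rpow_mult_distr. f_equal. field. }
  assert (HX : 0 < X) by (apply pow_lt; lra).
  assert (HY : 0 <= Y) by (apply pow_le; lra).
  assert (HLp : 0 < LL m) by lra.
  assert (Hr : LL (S m) / LL m - al = (LL (S m) - al * LL m) / LL m) by (field; lra).
  rewrite Hr. unfold Rdiv. rewrite Rabs_mult, (Rabs_pos_eq (/ LL m)) by (left; apply Rinv_0_lt_compat; lra).
  set (u := Rabs (LL (S m) - al * LL m)) in *.
  rewrite HXY in HE.
  apply (Rmult_lt_reg_r (LL m)); [lra|].
  rewrite Rmult_assoc, Rinv_l, Rmult_1_r by lra.
  assert (HY2 : Y * (2*K+1) < eps).
  { apply (Rmult_lt_reg_r (/ (2*K+1))). apply Rinv_0_lt_compat; lra.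
    rewrite Rmult_assoc, Rinv_r, Rmult_1_r by lra. exact HN. }
  assert (HXY2 : K * (X * Y) <= X * Y * (2*K+1) / 2).
  { assert (0 <= X * Y) by nra. nra. }
  assert (eps * (1/2 * X) <= eps * LL m) by (apply Rmult_le_compat_l; lra).
  assert (X * Y * (2*K+1) < eps * X) by nra.
  lra.
Qed.
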